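(* Let $T_1,\dots,T_n$ be triangles in $E$, let $S$ be the set of vertices of $\bigcap_{i=1}^nT_i$, let $0<\epsilon<1$, and let $P$ be the convex hull of all vertices of $T_1^{(1-\epsilon)},\dots,T_n^{(1-\epsilon)}$. Then $(P,S)$ is a NO instance of the intermediate polygon problem, i.e. there is no triangle $T$ with $S\subseteq T\subseteq P$.
   Context: For $d>0$ let $C_d=\{(x,y)\in\mathbb{R}^2: x^2+y^2\le d\}$, and $C=C_1$. $E$ is the set of all equilateral triangles $T\subseteq C$ whose vertices lie on the boundary of $C$. For $T\in E$, $T^{(1-\epsilon)}$ denotes the scaling of $T$ about the origin such that the vertices of $T^{(1-\epsilon)}$ lie on the boundary of $C_{1-\epsilon}$. An instance of the intermediate polygon problem is a polygon $P\subseteq\mathbb{R}^2$ and a finite point set $S$; it is a YES instance if there is a triangle $T$ with $S\subseteq T\subseteq P$, and a NO instance otherwise. *)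

(* Defs.v *)
From Stdlib Require Import Reals.
Open Scope R_scope.

Definition pt : Type := (R * R)%type.

Definition comb (x y : pt) (t : R) : pt :=
  ((1 - t) * fst x + t * fst y, (1 - t) * snd x + t * snd y).

Definition scale (s : R) (x : pt) : pt := (s * fst x, s * snd x).

Definition sqnorm (x : pt) : R := fst x * fst x + snd x * snd x.
Definition sqdist (x y : pt) : R :=
  (fst x - fst y) * (fst x - fst y) + (snd x - snd y) * (snd x - snd y).

Definition convex (A : pt -> Prop) : Prop :=
  forall x y t, A x -> A y -> 0 <= t <= 1 -> A (comb x y t).

Definition hull (A : pt -> Prop) : pt -> Prop :=
  fun p => forall C : pt -> Prop, convex C -> (forall q, A q -> C q) -> C p.

Definition three (a b c : pt) : pt -> Prop := fun p => p = a \/ p = b \/ p = c.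

Definition noncollinear (a b c : pt) : Prop :=
  (fst b - fst a) * (snd c - snd a) - (snd b - snd a) * (fst c - fst a) <> 0.

Definition is_triangle (T : pt -> Prop) : Prop :=
  exists a b c, noncollinear a b c /\ forall p, T p <-> hull (three a b c) p.

Definition vertex_of (A : pt -> Prop) (x : pt) : Prop :=
  A x /\ forall y z t, A y -> A z -> y <> z -> 0 < t < 1 -> x <> comb y z t.

(* a, b, c are the vertices of a triangle of E: equilateral, non-degenerate,
   vertices on the boundary x^2+y^2 = 1 of C *)
Definition inE (a b c : pt) : Prop :=
  sqnorm a = 1 /\ sqnorm b = 1 /\ sqnorm c = 1 /\ a <> b /\
  sqdist a b = sqdist b c /\ sqdist b c = sqdist c a.

(* Main.v *)
Require Import Defs.
From Stdlib Require Import Reals Lra Psatz List Classical.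
Open Scope R_scope.

Definition dot (x y : pt) : R := fst x * fst y + snd x * snd y.

Lemma dot_comb v x y t : dot v (comb x y t) = (1-t)*dot v x + t*dot v y.
Proof. destruct v, x, y; unfold dot, comb; simpl; ring. Qed.

Lemma hull_gen (A : pt -> Prop) q : A q -> hull A q.
Proof. intros H C _ HC; apply HC, H. Qed.

Lemma hull_sub (A C : pt -> Prop) p : convex C -> (forall q, A q -> C q) -> hull A p -> C p.
Proof. intros H1 H2 H3; apply H3; auto. Qed.

Lemma sq2_0 x y : x*x + y*y = 0 -> x = 0 /\ y = 0.
Proof. intro H; apply Rplus_sqr_eq_0; unfold Rsqr; exact H. Qed.

Lemma inE_facts a b c : inE a b c ->
  sqnorm a = 1 /\ sqnorm b = 1 /\ sqnorm c = 1 /\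
  dot a b = -1/2 /\ dot b c = -1/2 /\ dot c a = -1/2 /\
  fst a + fst b + fst c = 0 /\ snd a + snd b + snd c = 0.
Proof.
  destruct a as [a1 a2], b as [b1 b2], c as [c1 c2].
  unfold inE, sqnorm, sqdist, dot; simpl.
  intros [Ha [Hb [Hc [Hab [H1 H2]]]]].
  set (k := a1*b1+a2*b2).
  assert (Kbc : b1*c1+b2*c2 = k) by (unfold k; nra).
  assert (Kca : c1*a1+c2*a2 = k) by (unfold k; nra).
  assert (Kne : k <> 1).
  { intro Hk. apply Hab.
    assert (E : (a1-b1)*(a1-b1)+(a2-b2)*(a2-b2) = 0) by (unfold k in Hk; nra).
    destruct (sq2_0 _ _ E) as [E1 E2]. assert (E3 : a1 = b1) by lra. assert (E4 : a2 = b2) by lra. rewrite E3, E4; reflexivity. }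
  assert (G : (1-k)*(1-k)*(1+2*k) = 0).
  { assert (Gd : forall aa ab ac bb bc cc : R,
      aa = a1*a1+a2*a2 -> ab = a1*b1+a2*b2 -> ac = c1*a1+c2*a2 ->
      bb = b1*b1+b2*b2 -> bc = b1*c1+b2*c2 -> cc = c1*c1+c2*c2 ->
      aa*(bb*cc-bc*bc) - ab*(ab*cc-bc*ac) + ac*(ab*bc-bb*ac) = 0).
    { intros; subst; ring. }
    specialize (Gd 1 k k 1 k 1 (eq_sym Ha) eq_refl (eq_sym Kca) (eq_sym Hb) (eq_sym Kbc) (eq_sym Hc)).
    nra. }
  assert (Hk : k = -1/2).
  { apply Rmult_integral in G. destruct G as [G|G]; [|lra].
    apply Rmult_integral in G. destruct G; lra. }
  assert (Hs : (a1+b1+c1)*(a1+b1+c1) + (a2+b2+c2)*(a2+b2+c2) = 0) by (unfold k in *; nra).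
  destruct (sq2_0 _ _ Hs) as [S1 S2].
  repeat split; lra.
Qed.

Lemma hull3 a b c la lb lc : 0 <= la -> 0 <= lb -> 0 <= lc -> la+lb+lc = 1 ->
  hull (three a b c) (la*fst a + lb*fst b + lc*fst c, la*snd a + lb*snd b + lc*snd c).
Proof.
  intros H1 H2 H3 H4 C HC Hg.
  destruct (Req_dec (lb+lc) 0) as [E|E].
  - assert (lb = 0) by lra. assert (lc = 0) by lra. assert (la = 1) by lra. subst.
    replace (1 * fst a + 0 * fst b + 0 * fst c, 1 * snd a + 0 * snd b + 0 * snd c) with a.
    + apply Hg; left; auto.
    + destruct a; simpl; f_equal; ring.
  - replace (la*fst a + lb*fst b + lc*fst c, la*snd a + lb*snd b + lc*snd c)
      with (comb a (comb b c (lc/(lb+lc))) (lb+lc)).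
    + apply HC; [apply Hg; left; auto| |lra].
      apply HC; [apply Hg; right; left; auto|apply Hg; right; right; auto|].
      split; [unfold Rdiv; apply Rmult_le_pos; [lra|apply Rlt_le, Rinv_0_lt_compat; lra]|].
      apply Rmult_le_reg_r with (lb+lc); [lra|]. unfold Rdiv; rewrite Rmult_assoc, Rinv_l; lra.
    + destruct a, b, c; unfold comb; replace la with (1-lb-lc) by lra; simpl; f_equal; field; auto.
Qed.

Lemma tri_hull a b c x : inE a b c ->
  (hull (three a b c) x <-> dot a x >= -1/2 /\ dot b x >= -1/2 /\ dot c x >= -1/2).
Proof.
  intro HE. destruct (inE_facts _ _ _ HE) as [Na [Nb [Nc [Dab [Dbc [Dca [S1 S2]]]]]]].
  split.
  - apply (hull_sub _ (fun x => dot a x >= -1/2 /\ dot b x >= -1/2 /\ dot c x >= -1/2)).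
    + intros y z t [Y1 [Y2 Y3]] [Z1 [Z2 Z3]] T. rewrite !dot_comb. repeat split; nra.
    + intros q [H|[H|H]]; subst q; unfold dot, sqnorm in *; destruct a, b, c; simpl in *; repeat split; lra.
  - intros [X1 [X2 X3]].
    destruct a as [a1 a2], b as [b1 b2], c as [c1 c2], x as [x1 x2].
    unfold dot, sqnorm in *; simpl in *.
    set (Sa := a1*x1+a2*x2) in *. set (Sb := b1*x1+b2*x2) in *.
    assert (Ec1 : c1 = -a1-b1) by lra. assert (Ec2 : c2 = -a2-b2) by lra.
    assert (Sc : c1*x1+c2*x2 = -Sa-Sb) by (unfold Sa, Sb; rewrite Ec1, Ec2; ring).
    set (D := a1*b2-a2*b1).
    assert (HD : D*D = 3/4).
    { replace (D*D) with ((a1*a1+a2*a2)*(b1*b1+b2*b2) - (a1*b1+a2*b2)*(a1*b1+a2*b2)) by (unfold D; ring).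
      rewrite Na, Nb, Dab. field. }
    assert (D <> 0) by (intro Z; rewrite Z in HD; lra).
    set (al := (x1*b2-x2*b1)/D). set (be := (a1*x2-a2*x1)/D).
    assert (Hx1 : x1 = al*a1+be*b1) by (unfold al, be, D in *; field; auto).
    assert (Hx2 : x2 = al*a2+be*b2) by (unfold al, be, D in *; field; auto).
    assert (HSa : Sa = al - be/2).
    { unfold Sa. rewrite Hx1, Hx2.
      replace (a1 * (al * a1 + be * b1) + a2 * (al * a2 + be * b2)) with (al*(a1*a1+a2*a2) + be*(a1*b1+a2*b2)) by ring.
      rewrite Na, Dab; field. }
    assert (HSb : Sb = -al/2 + be).
    { unfold Sb. rewrite Hx1, Hx2.
      replace (b1 * (al * a1 + be * b1) + b2 * (al * a2 + be * b2)) with (al*(a1*b1+a2*b2) + be*(b1*b1+b2*b2)) by ring.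
      rewrite Nb, Dab; field. }
    rewrite Sc in X3.
    replace (x1, x2) with
      ((1/3 + 2/3*Sa)*a1 + (1/3 + 2/3*Sb)*b1 + (1/3 + 2/3*(-Sa-Sb))*c1,
       (1/3 + 2/3*Sa)*a2 + (1/3 + 2/3*Sb)*b2 + (1/3 + 2/3*(-Sa-Sb))*c2).
    + apply hull3; lra.
    + clearbody al be. rewrite Ec1, Ec2, HSa, HSb. f_equal; [rewrite Hx1|rewrite Hx2]; field.
Qed.

Fixpoint L (a b c : nat -> pt) (n : nat) : list pt :=
  match n with O => nil | S m => a m :: b m :: c m :: L a b c m end.

Lemma inL a b c n v : In v (L a b c n) <-> exists i, (i < n)%nat /\ (v = a i \/ v = b i \/ v = c i).
Proof.
  induction n as [|m IH]; simpl.
  - split; [tauto|intros [i [Hi _]]; lia].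
  - split.
    + intros [H|[H|[H|H]]].
      * exists m; split; [lia|left; auto].
      * exists m; split; [lia|right; left; auto].
      * exists m; split; [lia|right; right; auto].
      * destruct (proj1 IH H) as [i [Hi Hv]]. exists i; split; [lia|auto].
    + intros [i [Hi Hv]]. destruct (Nat.eq_dec i m) as [ -> | Ne].
      * destruct Hv as [ -> | [ -> | -> ] ]; auto.
      * right; right; right. apply IH. exists i; split; [lia|auto].
Qed.

Definition Ip (l : list pt) (x : pt) : Prop := forall v, In v l -> dot v x >= -1/2.

Lemma I_iff n a b c x : (forall i, (i < n)%nat -> inE (a i) (b i) (c i)) ->
  ((forall i, (i < n)%nat -> hull (three (a i) (b i) (c i)) x) <-> Ip (L a b c n) x).
Proof.
  intro HE. split.
  - intros H v Hv. apply inL in Hv. destruct Hv as [i [Hi Hv]].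
    apply (tri_hull _ _ _ x (HE i Hi)) in H; [|auto].
    destruct Hv as [ -> | [ -> | -> ] ]; tauto.
  - intros H i Hi. apply (tri_hull _ _ _ x (HE i Hi)).
    repeat split; apply H, inL; exists i; auto.
Qed.

Lemma unitL n a b c v : (forall i, (i < n)%nat -> inE (a i) (b i) (c i)) ->
  In v (L a b c n) -> sqnorm v = 1.
Proof.
  intros HE Hv. apply inL in Hv. destruct Hv as [i [Hi Hv]].
  destruct (inE_facts _ _ _ (HE i Hi)) as [Na [Nb [Nc _]]].
  destruct Hv as [ -> | [ -> | -> ] ]; auto.
Qed.

Lemma list_min (l : list pt) (g r : pt -> R) : (exists v, In v l /\ g v < 0) ->
  exists v, In v l /\ g v < 0 /\ forall u, In u l -> g u < 0 -> r v <= r u.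
Proof.
  induction l as [|x l IH]; simpl.
  - intros [v [[] _]].
  - intros Hex. destruct (Rlt_dec (g x) 0) as [Gx|Gx].
    + destruct (classic (exists v, In v l /\ g v < 0)) as [H|H].
      * destruct (IH H) as [v [Hv [Gv Hm]]].
        destruct (Rle_dec (r x) (r v)) as [Le|Le].
        -- exists x; repeat split; auto. intros u [<-|Hu] Gu; [lra|]. specialize (Hm u Hu Gu); lra.
        -- exists v; repeat split; auto. intros u [<-|Hu] Gu; [lra|]. auto.
      * exists x; repeat split; auto. intros u [<-|Hu] Gu; [lra|]. exfalso; apply H; eauto.
    + destruct Hex as [v [[<-|Hv] Gv]]; [lra|].
      destruct (IH (ex_intro _ v (conj Hv Gv))) as [w [Hw [Gw Hm]]].
      exists w; repeat split; auto. intros u [<-|Hu] Gu; [lra|]. auto.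
Qed.

Definition padd (x : pt) (t : R) (d : pt) : pt := (fst x + t*fst d, snd x + t*snd d).

Lemma dot_padd v x t d : dot v (padd x t d) = dot v x + t * dot v d.
Proof. unfold dot, padd; simpl; ring. Qed.

Lemma step l x d : Ip l x -> (exists v, In v l /\ dot v d < 0) ->
  exists t v, 0 <= t /\ In v l /\ dot v d < 0 /\ dot v (padd x t d) = -1/2 /\ Ip l (padd x t d).
Proof.
  intros HI Hex.
  destruct (list_min l (fun v => dot v d) (fun v => (dot v x + 1/2) / (- dot v d)) Hex)
    as [v [Hv [Gv Hm]]]. simpl in *.
  set (t := (dot v x + 1/2) / (- dot v d)).
  assert (Ht : t * (- dot v d) = dot v x + 1/2) by (unfold t; field; lra).
  exists t, v. specialize (HI v Hv) as HIv.
  assert (0 <= t).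
  { unfold t, Rdiv. apply Rmult_le_pos; [lra|apply Rlt_le, Rinv_0_lt_compat; lra]. }
  repeat split; auto.
  - rewrite dot_padd. lra.
  - intros u Hu. rewrite dot_padd. specialize (HI u Hu).
    destruct (Rlt_dec (dot u d) 0) as [Gu|Gu].
    + specialize (Hm u Hu Gu). fold t in Hm.
      assert (Hu' : (dot u x + 1/2) / (- dot u d) * (- dot u d) = dot u x + 1/2) by (field; lra).
      nra.
    + nra.
Qed.

Lemma exists_neg n a b c d : (forall i, (i < n)%nat -> inE (a i) (b i) (c i)) -> (0 < n)%nat ->
  d <> (0,0) -> exists v, In v (L a b c n) /\ dot v d < 0.
Proof.
  intros HE Hn Hd.
  destruct (inE_facts _ _ _ (HE 0%nat Hn)) as [Na [Nb [Nc [Dab [Dbc [Dca [S1 S2]]]]]]].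
  assert (Hin : forall v, v = a 0%nat \/ v = b 0%nat \/ v = c 0%nat -> In v (L a b c n)).
  { intros v Hv. apply inL. exists 0%nat; auto. }
  apply NNPP; intro H.
  assert (Hge : forall v, v = a 0%nat \/ v = b 0%nat \/ v = c 0%nat -> dot v d >= 0).
  { intros v Hv. apply Rnot_lt_ge. intro Hl. apply H. exists v; split; auto. }
  pose proof (Hge _ (or_introl eq_refl)) as Ga.
  pose proof (Hge _ (or_intror (or_introl eq_refl))) as Gb.
  pose proof (Hge _ (or_intror (or_intror eq_refl))) as Gc.
  destruct (a 0%nat) as [a1 a2], (b 0%nat) as [b1 b2], (c 0%nat) as [c1 c2], d as [d1 d2].
  unfold dot, sqnorm in *; simpl in *.
  assert (Sum : a1*d1+a2*d2 + (b1*d1+b2*d2) + (c1*d1+c2*d2) = 0).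
  { replace (a1*d1+a2*d2 + (b1*d1+b2*d2) + (c1*d1+c2*d2)) with ((a1+b1+c1)*d1 + (a2+b2+c2)*d2) by ring.
    rewrite S1, S2; ring. }
  assert (Ea : a1*d1+a2*d2 = 0) by lra.
  assert (Eb : b1*d1+b2*d2 = 0) by lra.
  assert (HD : (a1*b2-a2*b1)*(a1*b2-a2*b1) = 3/4).
  { replace ((a1*b2-a2*b1)*(a1*b2-a2*b1)) with ((a1*a1+a2*a2)*(b1*b1+b2*b2) - (a1*b1+a2*b2)*(a1*b1+a2*b2)) by ring.
    rewrite Na, Nb, Dab. field. }
  assert (E1 : (a1*b2-a2*b1)*d1 = 0).
  { replace ((a1*b2-a2*b1)*d1) with (b2*(a1*d1+a2*d2) - a2*(b1*d1+b2*d2)) by ring. rewrite Ea, Eb; ring. }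
  assert (E2 : (a1*b2-a2*b1)*d2 = 0).
  { replace ((a1*b2-a2*b1)*d2) with (a1*(b1*d1+b2*d2) - b1*(a1*d1+a2*d2)) by ring. rewrite Ea, Eb; ring. }
  apply Hd. apply Rmult_integral in E1. apply Rmult_integral in E2.
  destruct E1 as [E1|E1]; [rewrite E1 in HD; lra|].
  destruct E2 as [E2|E2]; [rewrite E2 in HD; lra|]. subst; auto.
Qed.

Lemma vertex_crit n a b c x v1 v2 : (forall i, (i < n)%nat -> inE (a i) (b i) (c i)) ->
  Ip (L a b c n) x -> In v1 (L a b c n) -> In v2 (L a b c n) ->
  dot v1 x = -1/2 -> dot v2 x = -1/2 -> fst v1 * snd v2 - snd v1 * fst v2 <> 0 ->
  vertex_of (fun p => forall i, (i < n)%nat -> hull (three (a i) (b i) (c i)) p) x.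
Proof.
  intros HE HI H1 H2 X1 X2 Hdet. split.
  - apply I_iff; auto.
  - intros y z t Hy Hz Hyz Ht Hx.
    apply I_iff in Hy; [|auto]. apply I_iff in Hz; [|auto].
    pose proof (Hy v1 H1). pose proof (Hz v1 H1). pose proof (Hy v2 H2). pose proof (Hz v2 H2).
    rewrite Hx, dot_comb in X1, X2.
    assert (dot v1 y <= -1/2) by nra. assert (dot v1 z <= -1/2) by nra.
    assert (dot v2 y <= -1/2) by nra. assert (dot v2 z <= -1/2) by nra.
    assert (A1 : dot v1 y = dot v1 z) by lra. assert (A2 : dot v2 y = dot v2 z) by lra.
    apply Hyz. destruct v1 as [p1 p2], v2 as [q1 q2], y as [y1 y2], z as [z1 z2].
    unfold dot in *; simpl in *.
    assert (E1 : (p1*q2 - p2*q1)*(y1-z1) = 0).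
    { replace ((p1*q2 - p2*q1)*(y1-z1)) with (q2*((p1*y1+p2*y2) - (p1*z1+p2*z2)) - p2*((q1*y1+q2*y2)-(q1*z1+q2*z2))) by ring.
      rewrite A1, A2; ring. }
    assert (E2 : (p1*q2 - p2*q1)*(y2-z2) = 0).
    { replace ((p1*q2 - p2*q1)*(y2-z2)) with (-q1*((p1*y1+p2*y2) - (p1*z1+p2*z2)) + p1*((q1*y1+q2*y2)-(q1*z1+q2*z2))) by ring.
      rewrite A1, A2; ring. }
    apply Rmult_integral in E1. apply Rmult_integral in E2.
    destruct E1 as [E1|E1]; [contradiction|]. destruct E2 as [E2|E2]; [contradiction|].
    f_equal; lra.
Qed.

Lemma key n a b c w : (forall i, (i < n)%nat -> inE (a i) (b i) (c i)) -> (0 < n)%nat ->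
  sqnorm w = 1 ->
  exists x, vertex_of (fun p => forall i, (i < n)%nat -> hull (three (a i) (b i) (c i)) p) x
            /\ dot w x >= 1/2.
Proof.
  intros HE Hn Hw.
  set (l := L a b c n).
  set (x0 := (fst w / 2, snd w / 2)).
  assert (I0 : Ip l x0).
  { intros v Hv. pose proof (unitL _ _ _ _ v HE Hv) as Nv.
    destruct v as [v1 v2], w as [w1 w2]; unfold x0, dot, sqnorm in *; simpl in *.
    assert (0 <= (v1+w1)*(v1+w1) + (v2+w2)*(v2+w2)) by (apply Rplus_le_le_0_compat; apply Rle_0_sqr).
    nra. }
  assert (Wnz : w <> (0,0)).
  { intro Z. rewrite Z in Hw. unfold sqnorm in Hw; simpl in Hw; lra. }
  destruct (step l x0 w I0 (exists_neg n a b c w HE Hn Wnz)) as [t1 [v1 [T1 [Hv1 [G1 [E1 I1]]]]]].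
  set (x1 := padd x0 t1 w) in *.
  assert (W1 : dot w x1 >= 1/2).
  { unfold x1. rewrite dot_padd. unfold x0, dot, sqnorm in *; destruct w; simpl in *. nra. }
  pose proof (unitL _ _ _ _ v1 HE Hv1) as N1.
  assert (Hd : exists d, dot v1 d = 0 /\ dot w d >= 0 /\ d <> (0,0) /\
             forall u, dot u d <> 0 -> fst v1 * snd u - snd v1 * fst u <> 0).
  { destruct v1 as [p1 p2]. unfold sqnorm in N1; simpl in N1.
    destruct (Rle_dec 0 (dot w (-p2, p1))) as [Le|Le].
    - exists (-p2, p1). repeat split.
      + unfold dot; simpl; ring.
      + lra.
      + intro Z. injection Z; intros; nra.
      + intros [u1 u2] Hu; unfold dot in *; simpl in *. intro Z; apply Hu. nra.
    - exists (p2, -p1). repeat split.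
      + unfold dot; simpl; ring.
      + unfold dot in *; simpl in *. lra.
      + intro Z. injection Z; intros; nra.
      + intros [u1 u2] Hu; unfold dot in *; simpl in *. intro Z; apply Hu. nra. }
  destruct Hd as [d [D1 [D2 [D3 D4]]]].
  destruct (step l x1 d I1 (exists_neg n a b c d HE Hn D3)) as [t2 [v2 [T2 [Hv2 [G2 [E2 I2]]]]]].
  exists (padd x1 t2 d). split.
  - apply (vertex_crit n a b c _ v1 v2 HE I2 Hv1 Hv2); auto.
    + rewrite dot_padd, D1. lra.
    + apply D4. lra.
  - rewrite dot_padd. nra.
Qed.

Lemma cover p q r w x : hull (three p q r) x -> dot w x >= 1/2 ->
  dot w p >= 1/2 \/ dot w q >= 1/2 \/ dot w r >= 1/2.
Proof.
  intros H Hx. apply NNPP; intro N.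
  assert (C : dot w x < 1/2).
  { apply (hull_sub (three p q r) (fun y => dot w y < 1/2)); auto.
    - intros y z t Y Z T. rewrite dot_comb.
      assert (0 <= (1-t)*(1/2 - dot w y)) by (apply Rmult_le_pos; lra).
      destruct (Req_dec t 0) as [T0|T0].
      + subst t. lra.
      + assert (0 < t*(1/2 - dot w z)) by (apply Rmult_lt_0_compat; lra). nra.
    - intros s [-> | [-> | ->]]; apply Rnot_ge_lt; intro; apply N; auto. }
  lra.
Qed.

Lemma no_two wi wj wk x : fst wi + fst wj + fst wk = 0 -> snd wi + snd wj + snd wk = 0 ->
  sqnorm wk = 1 -> sqnorm x < 1 -> dot wi x >= 1/2 -> dot wj x >= 1/2 -> False.
Proof.
  destruct wi as [a1 a2], wj as [b1 b2], wk as [c1 c2], x as [x1 x2].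
  unfold dot, sqnorm; simpl. intros S1 S2 Nk Nx Hi Hj.
  assert (Hk : c1*x1+c2*x2 <= -1).
  { replace c1 with (-a1-b1) by lra. replace c2 with (-a2-b2) by lra. nra. }
  assert (Lag : (c1*c1+c2*c2)*(x1*x1+x2*x2) - (c1*x1+c2*x2)*(c1*x1+c2*x2) = (c1*x2-c2*x1)*(c1*x2-c2*x1)) by ring.
  assert (0 <= (c1*x2-c2*x1)*(c1*x2-c2*x1)) by apply Rle_0_sqr.
  rewrite Nk in Lag. nra.
Qed.

Lemma polar p : sqnorm p < 1 -> exists rho u1 u2, 0 <= rho < 1 /\ u1*u1+u2*u2 = 1 /\
  p = (rho*u1, rho*u2).
Proof.
  destruct p as [p1 p2]; unfold sqnorm; simpl; intro H.
  destruct (Req_dec (p1*p1+p2*p2) 0) as [Z|Z].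
  - destruct (sq2_0 _ _ Z) as [-> ->]. exists 0, 1, 0. repeat split; try lra; f_equal; ring.
  - assert (Pz : 0 < p1*p1+p2*p2) by (assert (0 <= p1*p1+p2*p2) by nra; lra).
    set (rho := sqrt (p1*p1+p2*p2)).
    assert (R2 : rho*rho = p1*p1+p2*p2) by (apply sqrt_sqrt; lra).
    assert (Rp : 0 < rho) by (apply sqrt_lt_R0; lra).
    exists rho, (p1/rho), (p2/rho). repeat split; try lra.
    + nra.
    + replace (p1 / rho * (p1 / rho) + p2 / rho * (p2 / rho)) with ((p1*p1+p2*p2)/(rho*rho)) by (field; lra). rewrite R2; field; lra.
    + f_equal; field; lra.
Qed.

Lemma frame p : sqnorm p < 1 -> exists w1 w2 w3,
  sqnorm w1 = 1 /\ sqnorm w2 = 1 /\ sqnorm w3 = 1 /\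
  fst w1 + fst w2 + fst w3 = 0 /\ snd w1 + snd w2 + snd w3 = 0 /\
  dot w1 p < 1/2 /\ dot w2 p < 1/2 /\ dot w3 p < 1/2.
Proof.
  intro H. destruct (polar p H) as [rho [u1 [u2 [Hr [Hu ->]]]]].
  set (h := sqrt 3 / 2).
  assert (Hh : h*h = 3/4) by (unfold h; replace (sqrt 3 / 2 * (sqrt 3 / 2)) with (sqrt 3 * sqrt 3 / 4) by field;
                              rewrite sqrt_sqrt; lra).
  exists (u1/2 - h*u2, h*u1 + u2/2), (-u1, -u2), (u1/2 + h*u2, -h*u1 + u2/2).
  unfold sqnorm, dot; simpl. repeat split; try lra; try nra.
Qed.

Theorem mainTheorem13 (n : nat) (a b c : nat -> pt) (eps : R) :
  (forall i, (i < n)%nat -> inE (a i) (b i) (c i)) ->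
  0 < eps < 1 ->
  let S := vertex_of (fun p => forall i, (i < n)%nat -> hull (three (a i) (b i) (c i)) p) in
  let s := sqrt (1 - eps) in
  let P := hull (fun p => exists i, (i < n)%nat /\
                   three (scale s (a i)) (scale s (b i)) (scale s (c i)) p) in
  ~ (exists T : pt -> Prop, is_triangle T /\ (forall p, S p -> T p) /\ (forall p, T p -> P p)).
Proof.
  intros HE Heps S s P [T [[p [q [r [_ HT]]]] [HST HTP]]].
  assert (Tp : P p) by (apply HTP, HT, hull_gen; left; auto).
  assert (Tq : P q) by (apply HTP, HT, hull_gen; right; left; auto).
  assert (Tr : P r) by (apply HTP, HT, hull_gen; right; right; auto).
  destruct n as [|m].
  - apply (hull_sub _ (fun _ => False)) in Tp; auto.
    + intros y z t [].
    + intros x [i [Hi _]]; lia.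
  - assert (Bd : forall x, P x -> sqnorm x < 1).
    { intros x Hx.
      assert (sqnorm x <= 1 - eps); [|lra].
      apply (hull_sub _ (fun y => sqnorm y <= 1 - eps)) in Hx; auto.
      - intros y z t Y Z Ht. destruct y as [y1 y2], z as [z1 z2]; unfold sqnorm, comb in *; simpl in *.
        assert (Id : ((1-t)*y1+t*z1)*((1-t)*y1+t*z1) + ((1-t)*y2+t*z2)*((1-t)*y2+t*z2)
                     = (1-t)*(y1*y1+y2*y2) + t*(z1*z1+z2*z2) - t*(1-t)*((y1-z1)*(y1-z1)+(y2-z2)*(y2-z2))) by ring.
        rewrite Id.
        assert (0 <= t*(1-t)*((y1-z1)*(y1-z1)+(y2-z2)*(y2-z2))).
        { apply Rmult_le_pos; [apply Rmult_le_pos; lra|]. apply Rplus_le_le_0_compat; apply Rle_0_sqr. }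
        nra.
      - intros y [i [Hi Hy]].
        destruct (inE_facts _ _ _ (HE i Hi)) as [Na [Nb [Nc _]]].
        assert (Hs : s*s = 1 - eps) by (apply sqrt_sqrt; lra).
        assert (Sc : forall v, sqnorm v = 1 -> sqnorm (scale s v) <= 1 - eps).
        { intros [v1 v2] Nv; unfold scale, sqnorm in *; simpl in *.
          replace (s * v1 * (s * v1) + s * v2 * (s * v2)) with (s*s*(v1*v1+v2*v2)) by ring.
          rewrite Hs, Nv; lra. }
        destruct Hy as [-> | [-> | ->]]; apply Sc; auto. }
    pose proof (Bd p Tp) as Np. pose proof (Bd q Tq) as Nq. pose proof (Bd r Tr) as Nr.
    destruct (frame p Np) as [w1 [w2 [w3 [N1 [N2 [N3 [S1 [S2 [P1 [P2 P3]]]]]]]]]].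
    assert (Cov : forall w, sqnorm w = 1 -> dot w p < 1/2 -> dot w q >= 1/2 \/ dot w r >= 1/2).
    { intros w Nw Pw.
      destruct (key (Datatypes.S m) a b c w HE ltac:(lia) Nw) as [x [Sx Wx]].
      assert (Tx : T x) by (apply HST; exact Sx).
      apply HT in Tx.
      destruct (cover p q r w x Tx Wx) as [H|H]; [lra|exact H]. }
    destruct (Cov w1 N1 P1) as [C1|C1]; destruct (Cov w2 N2 P2) as [C2|C2];
      destruct (Cov w3 N3 P3) as [C3|C3].
    + apply (no_two w1 w2 w3 q); auto.
    + apply (no_two w1 w2 w3 q); auto.
    + apply (no_two w1 w3 w2 q); auto; lra.
    + apply (no_two w2 w3 w1 r); auto; lra.
    + apply (no_two w2 w3 w1 q); auto; lra.
    + apply (no_two w1 w3 w2 r); auto; lra.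
    + apply (no_two w1 w2 w3 r); auto.
    + apply (no_two w1 w2 w3 r); auto.
Qed.
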